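(* Let $k\ge 1$ and let $P(n)=\sum_{i=0}^k\alpha_i n^i$ be a polynomial of degree $k$ with real coefficients. Let $q,R,h$ be positive integers and $p$ an integer such that \[\gcd(p,q)=1,\qquad \Bigl|\alpha_k-\frac pq\Bigr|\le\frac1{q^2},\qquad 2h\,k!\,R^{2-1/2^{k-2}}\le q.\] Then for every integer $N\ge R$, \[\frac1N\Bigl|\sum_{1\le n\le N}e(hP(n))\Bigr|\le C_k\Bigl(\frac1R+\frac qN\Bigr)^{1/2^{k-1}},\] where $C_k$ is a constant depending only on $k$.
   Context: $e(u)=\exp(2\pi i u)$ for real $u$. *)

(* Defs.v *)
From Stdlib Require Import Reals ZArith.
From Coquelicot Require Import Coquelicot.
Open Scope R_scope.

Definition e (u : R) : C := (cos (2 * PI * u), sin (2 * PI * u)).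

Fixpoint expsum (f : nat -> R) (N : nat) : C :=
  match N with
  | O => 0%C
  | S m => Cplus (expsum f m) (e (f (S m)))
  end.

Definition poly_eval (alpha : nat -> R) (k : nat) (n : nat) : R :=
  sum_f_R0 (fun i => alpha i * INR n ^ i) k.

(* Main.v *)
Require Import Defs.
From Stdlib Require Import Reals ZArith Lra Lia List Znumtheory.
From Coquelicot Require Import Coquelicot.
Open Scope R_scope.

Fixpoint csum (z : nat -> C) (L : nat) : C :=
  match L with O => (0,0) | S m => Cplus (csum z m) (z m) end.
Fixpoint rsum (f : nat -> R) (L : nat) : R :=
  match L with O => 0 | S m => rsum f m + f m end.

Lemma rsum_ext f g L : (forall n, (n < L)%nat -> f n = g n) -> rsum f L = rsum g L.
Proof. induction L; simpl; intros; auto. rewrite IHL, H; auto. Qed.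
Lemma csum_ext f g L : (forall n, (n < L)%nat -> f n = g n) -> csum f L = csum g L.
Proof. induction L; simpl; intros; auto. rewrite IHL, H; auto. Qed.
Lemma rsum_plus f g L : rsum (fun n => f n + g n) L = rsum f L + rsum g L.
Proof. induction L; simpl; [lra|rewrite IHL; lra]. Qed.
Lemma rsum_scal c f L : rsum (fun n => c * f n) L = c * rsum f L.
Proof. induction L; simpl; [lra|rewrite IHL; lra]. Qed.
Lemma rsum_le f g L : (forall n, (n < L)%nat -> f n <= g n) -> rsum f L <= rsum g L.
Proof. induction L; simpl; intros; [lra|]. pose proof (H L). pose proof (IHL (fun n h => H n (Nat.lt_lt_succ_r _ _ h))). specialize (H0 (Nat.lt_succ_diag_r _)). lra. Qed.
Lemma rsum_const c L : rsum (fun _ => c) L = c * INR L.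
Proof. induction L; simpl rsum; [simpl; lra|rewrite IHL, S_INR; lra]. Qed.
Lemma rsum_nonneg f L : (forall n, (n < L)%nat -> 0 <= f n) -> 0 <= rsum f L.
Proof. intros. rewrite <- (Rmult_0_l (INR L)), <- rsum_const. apply rsum_le; auto. Qed.
Lemma rsum_swap (F : nat -> nat -> R) a b :
  rsum (fun i => rsum (fun j => F i j) b) a = rsum (fun j => rsum (fun i => F i j) a) b.
Proof. induction a; simpl. - rewrite rsum_const; lra.
  - rewrite IHa, <- rsum_plus. reflexivity. Qed.
Lemma rsum_mul f g a b : rsum f a * rsum g b = rsum (fun i => rsum (fun j => f i * g j) b) a.
Proof. induction a; simpl; [lra|]. rewrite Rmult_plus_distr_r, IHa, rsum_scal. reflexivity. Qed.

Lemma fst_csum z L : fst (csum z L) = rsum (fun n => fst (z n)) L.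
Proof. induction L; simpl; auto. rewrite IHL; auto. Qed.
Lemma snd_csum z L : snd (csum z L) = rsum (fun n => snd (z n)) L.
Proof. induction L; simpl; auto. rewrite IHL; auto. Qed.
Lemma csum_plus f g L : csum (fun n => Cplus (f n) (g n)) L = Cplus (csum f L) (csum g L).
Proof. apply injective_projections; simpl; rewrite ?fst_csum, ?snd_csum; simpl;
  rewrite rsum_plus, ?fst_csum, ?snd_csum; auto. Qed.
Lemma csum_split z a b : csum z (a + b) = Cplus (csum z a) (csum (fun n => z (n + a)%nat) b).
Proof. induction b; simpl. - rewrite Nat.add_0_r. apply injective_projections; simpl; lra.
  - rewrite Nat.add_succ_r. simpl. rewrite IHb. rewrite (Nat.add_comm b a).
    apply injective_projections; simpl; lra. Qed.
Lemma Cmod_csum z L : Cmod (csum z L) <= rsum (fun n => Cmod (z n)) L.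
Proof. induction L; simpl. - replace (Cmod (0,0)) with 0; [lra|]. unfold Cmod; simpl. replace (0*(0*1)+0*(0*1)) with 0 by ring. rewrite sqrt_0. reflexivity.
  - eapply Rle_trans; [apply Cmod_triangle|]. lra. Qed.
Lemma csum_swap (F : nat -> nat -> C) a b :
  csum (fun i => csum (fun j => F i j) b) a = csum (fun j => csum (fun i => F i j) a) b.
Proof. apply injective_projections; rewrite ?fst_csum, ?snd_csum;
  [ transitivity (rsum (fun i => rsum (fun j => fst (F i j)) b) a)
  | transitivity (rsum (fun i => rsum (fun j => snd (F i j)) b) a)];
  try (apply rsum_ext; intros; rewrite ?fst_csum, ?snd_csum; reflexivity);
  rewrite rsum_swap; apply rsum_ext; intros; rewrite ?fst_csum, ?snd_csum; reflexivity. Qed.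

Lemma Cmod_e x : Cmod (e x) = 1.
Proof. unfold Cmod, e; simpl. rewrite !Rmult_1_r. pose proof (sin2_cos2 (2*PI*x)).
  unfold Rsqr in H. rewrite Rplus_comm, H. apply sqrt_1. Qed.

Definition T (g : nat -> R) (L : nat) : C := csum (fun n => e (g n)) L.

Lemma T_le g L : Cmod (T g L) <= INR L.
Proof. eapply Rle_trans; [apply Cmod_csum|]. rewrite <- (Rmult_1_l (INR L)), <- rsum_const.
  apply rsum_le. intros; rewrite Cmod_e; lra. Qed.

Lemma T_ext f g L : (forall n, f n = g n) -> T f L = T g L.
Proof. intros. unfold T. apply csum_ext. intros; rewrite H; auto. Qed.

Lemma csum_const x K : csum (fun _ => x) K = (INR K * fst x, INR K * snd x).
Proof. induction K as [|K IHK]; simpl csum. - apply injective_projections; simpl; lra.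
  - rewrite IHK, S_INR. apply injective_projections; simpl; lra. Qed.

Lemma Cmod_scal a x : 0 <= a -> Cmod (a * fst x, a * snd x) = a * Cmod x.
Proof. intros. unfold Cmod. simpl fst; simpl snd.
  replace ((a * fst x) ^ 2 + (a * snd x) ^ 2) with (a^2 * (fst x ^ 2 + snd x ^ 2)) by ring.
  rewrite sqrt_mult by (try apply pow2_ge_0; nra). rewrite sqrt_pow2 by auto. reflexivity. Qed.

Lemma Cmod_sq z : Cmod z ^ 2 = fst z ^ 2 + snd z ^ 2.
Proof. unfold Cmod. rewrite pow2_sqrt; auto. nra. Qed.

Lemma CS x n : (rsum x n)^2 <= INR n * rsum (fun i => x i ^ 2) n.
Proof.
  induction n as [|n IH]; cbn [rsum]. - simpl; lra.
  - rewrite S_INR. set (S := rsum x n) in *. set (Q := rsum (fun i => x i ^ 2) n) in *.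
    assert (HQ : 0 <= Q) by (apply rsum_nonneg; intros; apply pow2_ge_0).
    pose proof (pos_INR n). destruct (Req_dec (INR n) 0) as [E|E].
    + rewrite E in *. assert (HS : S = 0). { apply Rsqr_0_uniq. unfold Rsqr. apply Rle_antisym; nra. }
      rewrite HS. replace ((0 + x n)^2) with (x n ^2) by ring. lra.
    + assert (0 < INR n) by lra.
      assert (0 <= (S - INR n * x n)^2) by apply pow2_ge_0.
      assert (INR n * (Q + INR n * x n ^ 2 - 2 * S * x n) >= 0) by nra.
      assert (Q + INR n * x n ^ 2 - 2 * S * x n >= 0).
      { destruct (Rle_dec 0 (Q + INR n * x n ^ 2 - 2 * S * x n)); [lra|]. nra. }
      nra.
Qed.

Lemma pow2j_pos j : (1 <= 2 ^ j)%nat.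
Proof. induction j; simpl; lia. Qed.

Lemma power_mean j x n : (forall i, (i < n)%nat -> 0 <= x i) ->
  (rsum x n)^(2^j) <= INR n ^ (2^j - 1) * rsum (fun i => x i ^ (2^j)) n.
Proof.
  intros Hx. induction j as [|j IH].
  - simpl. rewrite Rmult_1_l, Rmult_1_r. right. apply rsum_ext. intros. ring.
  - assert (E : (2 ^ S j = 2 ^ j * 2)%nat) by (rewrite Nat.pow_succ_r'; lia).
    pose proof (pow2j_pos j).
    rewrite E, pow_mult.
    assert (0 <= rsum x n) by (apply rsum_nonneg; auto).
    assert (0 <= rsum x n ^ 2 ^ j) by (apply pow_le; auto).
    eapply Rle_trans. { apply pow_incr. split; [auto|apply IH]. }
    rewrite Rpow_mult_distr.
    eapply Rle_trans. { apply Rmult_le_compat_l. apply pow_le, pow_le, pos_INR. apply CS. }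
    replace (2 ^ j * 2 - 1)%nat with (((2^j - 1) * 2) + 1)%nat by lia.
    rewrite pow_add, pow_mult, pow_1, Rmult_assoc. right. f_equal. f_equal.
    apply rsum_ext; intros. rewrite <- pow_mult. reflexivity.
Qed.

Lemma pow3 j a b c : 0 <= a -> 0 <= b -> 0 <= c ->
  (a + b + c) ^ (2^j) <= 3 ^ (2^j - 1) * (a ^ (2^j) + b ^ (2^j) + c ^ (2^j)).
Proof.
  intros. induction j as [|j IH]. - simpl. lra.
  - assert (E : (2 ^ S j = 2 ^ j * 2)%nat) by (rewrite Nat.pow_succ_r'; lia).
    pose proof (pow2j_pos j). rewrite E, !pow_mult.
    assert (0 <= (a + b + c) ^ 2 ^ j) by (apply pow_le; lra).
    eapply Rle_trans. { apply pow_incr. split; [auto|apply IH]. }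
    replace (2 ^ j * 2 - 1)%nat with (((2^j - 1) * 2) + 1)%nat by lia.
    rewrite pow_add, pow_mult, pow_1, Rpow_mult_distr.
    assert (0 <= a ^ 2 ^ j) by (apply pow_le; lra).
    assert (0 <= b ^ 2 ^ j) by (apply pow_le; lra).
    assert (0 <= c ^ 2 ^ j) by (apply pow_le; lra).
    assert (0 <= (3 ^ (2 ^ j - 1)) ^ 2) by (apply pow2_ge_0).
    set (A := a ^ 2 ^ j) in *. set (B := b ^ 2 ^ j) in *. set (C0 := c ^ 2 ^ j) in *.
    set (K := (3 ^ (2 ^ j - 1)) ^ 2) in *.
    assert ((A + B + C0)^2 <= 3 * (A^2 + B^2 + C0^2)).
    { assert (0 <= (A-B)^2) by apply pow2_ge_0. assert (0 <= (B-C0)^2) by apply pow2_ge_0.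
      assert (0 <= (A-C0)^2) by apply pow2_ge_0. nra. }
    rewrite Rmult_assoc. apply Rmult_le_compat_l; auto.
Qed.

Definition Csub (a b : C) : C := (fst a - fst b, snd a - snd b).
Lemma Cmod_Csub_le a b : Cmod (Csub a b) <= Cmod a + Cmod b.
Proof. replace (Csub a b) with (Cplus a (Copp b)).
  - eapply Rle_trans; [apply Cmod_triangle|]. rewrite Cmod_opp. lra.
  - apply injective_projections; simpl; lra. Qed.

Lemma T_shift_diff g L r : Cmod (Csub (T g L) (T (fun n => g (n + r)%nat) L)) <= 2 * INR r.
Proof.
  assert (E1 := csum_split (fun n => e (g n)) r L).
  assert (E2 := csum_split (fun n => e (g n)) L r).
  rewrite Nat.add_comm in E2. rewrite E2 in E1. fold (T g L) (T g r) in E1.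
  replace (Csub (T g L) (T (fun n => g (n + r)%nat) L)) with (Csub (T g r) (T (fun n => g (n + L)%nat) r)).
  - eapply Rle_trans; [apply Cmod_Csub_le|]. pose proof (T_le g r). pose proof (T_le (fun n => g (n + L)%nat) r). lra.
  - unfold T in *. apply (f_equal fst) in E1 as F1. apply (f_equal snd) in E1 as F2. simpl in F1, F2.
    apply injective_projections; simpl; lra.
Qed.

Lemma fst_e x : fst (e x) = cos (2 * PI * x). Proof. reflexivity. Qed.
Lemma snd_e x : snd (e x) = sin (2 * PI * x). Proof. reflexivity. Qed.

Lemma W_sq g n H : Cmod (csum (fun r => e (g (n + r)%nat)) H) ^ 2 =
  rsum (fun r => rsum (fun s => cos (2 * PI * (g (n + r)%nat - g (n + s)%nat))) H) H.
Proof.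
  rewrite Cmod_sq, fst_csum, snd_csum, <- !Rsqr_pow2.
  unfold Rsqr. rewrite !rsum_mul, <- rsum_plus. apply rsum_ext; intros r _.
  rewrite <- rsum_plus. apply rsum_ext; intros s _. rewrite fst_e, fst_e, snd_e, snd_e.
  replace (2 * PI * (g (n + r)%nat - g (n + s)%nat)) with (2 * PI * g (n + r)%nat - 2 * PI * g (n + s)%nat) by ring.
  rewrite cos_minus. ring.
Qed.

Lemma cos_sum_le g L r s :
  rsum (fun n => cos (2 * PI * (g (n + r)%nat - g (n + s)%nat))) L <=
  Cmod (T (fun n => g (n + max r s)%nat - g (n + min r s)%nat) L).
Proof.
  eapply Rle_trans; [|apply re_le_Cmod]. eapply Rle_trans; [|apply Rle_abs].
  unfold Re, T. rewrite fst_csum. right. apply rsum_ext; intros n _. rewrite fst_e.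
  destruct (Nat.le_ge_cases r s).
  - rewrite Nat.max_r, Nat.min_l by auto. rewrite <- cos_neg. f_equal. ring.
  - rewrite Nat.max_l, Nat.min_r by auto. reflexivity.
Qed.

Lemma vdc g L H : (1 <= H)%nat ->
  Cmod (T g L) ^ 2 <= 2 * INR L / INR H ^ 2 *
    rsum (fun r => rsum (fun s => Cmod (T (fun n => g (n + max r s)%nat - g (n + min r s)%nat) L)) H) H
  + 8 * INR H ^ 2.
Proof.
  intros HH.
  assert (HHr : 1 <= INR H) by (apply (le_INR 1); auto).
  set (W := fun n => csum (fun r => e (g (n + r)%nat)) H).
  set (SS := rsum (fun r => rsum (fun s => Cmod (T (fun n => g (n + max r s)%nat - g (n + min r s)%nat) L)) H) H).
  assert (EA : csum (fun r => T (fun n => g (n + r)%nat) L) H = csum W L).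
  { unfold T, W. apply csum_swap. }
  assert (SA : INR H * Cmod (T g L) <= Cmod (csum W L) + 2 * INR H ^ 2).
  { rewrite <- Cmod_scal by lra. rewrite <- EA.
    set (D := csum (fun r => Csub (T g L) (T (fun n => g (n + r)%nat) L)) H).
    replace (INR H * fst (T g L), INR H * snd (T g L)) with
      (Cplus (csum (fun r => T (fun n => g (n + r)%nat) L) H) D).
    - eapply Rle_trans; [apply Cmod_triangle|]. apply Rplus_le_compat_l.
      eapply Rle_trans; [apply Cmod_csum|].
      replace (2 * INR H ^ 2) with (rsum (fun _ => 2 * INR H) H) by (rewrite rsum_const; ring).
      apply rsum_le. intros r Hr. eapply Rle_trans; [apply T_shift_diff|].
      apply lt_INR in Hr. lra.
    - rewrite <- csum_const. unfold D. rewrite <- csum_plus. apply csum_ext. intros r _.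
      apply injective_projections; simpl; lra. }
  assert (SB : Cmod (csum W L) ^ 2 <= INR L * SS).
  { eapply Rle_trans. { apply pow_incr. split; [apply Cmod_ge_0| apply Cmod_csum]. }
    eapply Rle_trans; [apply CS|]. apply Rmult_le_compat_l; [apply pos_INR|].
    unfold SS. eapply Rle_trans.
    { apply rsum_le. intros n _. unfold W. rewrite W_sq. apply Rle_refl. }
    rewrite rsum_swap. apply rsum_le; intros r _. rewrite rsum_swap. apply rsum_le; intros s _.
    apply cos_sum_le. }
  assert (0 <= Cmod (T g L)) by apply Cmod_ge_0.
  assert (0 <= Cmod (csum W L)) by apply Cmod_ge_0.
  assert (HSQ : (INR H * Cmod (T g L))^2 <= 2 * INR L * SS + 8 * INR H ^ 4).
  { eapply Rle_trans. { apply pow_incr. split; [|apply SA]. nra. }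
    assert (0 <= (Cmod (csum W L) - 2 * INR H ^ 2)^2) by apply pow2_ge_0. nra. }
  apply Rmult_le_reg_l with (INR H ^ 2). { nra. }
  rewrite Rpow_mult_distr in HSQ. eapply Rle_trans; [apply HSQ|].
  right. field. lra.
Qed.

Fixpoint DegLe (j : nat) (r : nat -> R) : Prop :=
  match j with
  | O => forall n, r n = r O
  | S j' => forall d, DegLe j' (fun n => r (n + d)%nat - r n)
  end.

Lemma DegLe_ext j : forall r s, (forall n, r n = s n) -> DegLe j r -> DegLe j s.
Proof. induction j; simpl; intros r s E H.
  - intros n. rewrite <- !E. auto.
  - intros d. eapply IHj; [|apply (H d)]. intros n; simpl; rewrite !E; reflexivity. Qed.

Lemma DegLe_add j : forall r s, DegLe j r -> DegLe j s -> DegLe j (fun n => r n + s n).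
Proof. induction j; simpl; intros r s Hr Hs.
  - intros n. rewrite Hr, Hs. auto.
  - intros d. eapply DegLe_ext; [|apply (IHj _ _ (Hr d) (Hs d))]. intros; simpl; ring. Qed.

Lemma DegLe_scal j : forall c r, DegLe j r -> DegLe j (fun n => c * r n).
Proof. induction j; simpl; intros c r Hr.
  - intros n. rewrite Hr. auto.
  - intros d. eapply DegLe_ext; [|apply (IHj c _ (Hr d))]. intros; simpl; ring. Qed.

Lemma DegLe_const j c : DegLe j (fun _ => c).
Proof. revert c; induction j; simpl; intros; auto. Qed.

Lemma DegLe_shift j : forall r s, DegLe j r -> DegLe j (fun n => r (n + s)%nat).
Proof. induction j; simpl; intros r s Hr.
  - intros n. rewrite (Hr (n+s)%nat), (Hr s). auto.
  - intros d. eapply DegLe_ext; [|apply (IHj _ s (Hr d))]. intros; simpl.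
    replace (n + d + s)%nat with (n + s + d)%nat by lia. reflexivity. Qed.

Lemma DegLe_S j : forall r, DegLe j r -> DegLe (S j) r.
Proof. induction j; simpl; intros r Hr.
  - intros d n. rewrite (Hr (n+d)%nat), (Hr n), (Hr d). ring.
  - intros d. exact (IHj _ (Hr d)). Qed.

Lemma DegLe_le i j r : (i <= j)%nat -> DegLe i r -> DegLe j r.
Proof. induction 1; auto. intros; apply DegLe_S; auto. Qed.

Lemma DegLe_mul_n j : forall r, DegLe j r -> DegLe (S j) (fun n => INR n * r n).
Proof. induction j; intros r Hr.
  - simpl in *. intros d n. rewrite (Hr (n+d)%nat), (Hr n), plus_INR. simpl.
    rewrite (Hr d). ring.
  - intros d.
    eapply DegLe_ext with (r := fun n => INR n * (r (n + d)%nat - r n) + INR d * r (n + d)%nat).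
    { intros n. rewrite plus_INR. ring. }
    apply DegLe_add.
    + apply IHj. exact (Hr d).
    + apply DegLe_scal. apply DegLe_shift. exact Hr.
Qed.

Lemma DegLe_pow j : DegLe j (fun n => INR n ^ j).
Proof. induction j.
  - simpl. auto.
  - eapply DegLe_ext; [|apply DegLe_mul_n; exact IHj]. intros; simpl; ring. Qed.

Lemma DiffPow j d : DegLe j (fun n => (INR n + INR d) ^ (S (S j)) - INR n ^ (S (S j)) - INR (S (S j)) * INR d * INR n ^ (S j)).
Proof.
  induction j.
  - simpl. intros n. ring.
  - eapply DegLe_ext with (r := fun n => INR n * ((INR n + INR d) ^ (S (S j)) - INR n ^ (S (S j)) - INR (S (S j)) * INR d * INR n ^ (S j))
        + INR d * ((INR n + INR d) ^ (S (S j)) - INR n ^ (S (S j)) - INR (S (S j)) * INR d * INR n ^ (S j))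
        + INR (S (S j)) * INR d ^ 2 * INR n ^ (S j)).
    { intros n. set (m := INR n). set (x := INR d). set (u := m ^ S j).
      replace ((m + x) ^ S (S (S j))) with ((m + x) * (m + x) ^ S (S j)) by reflexivity.
      replace (m ^ S (S (S j))) with (m * (m * u)) by reflexivity.
      replace (m ^ S (S j)) with (m * u) by reflexivity.
      rewrite !S_INR. ring. }
    apply DegLe_add; [apply DegLe_add|].
    + apply DegLe_mul_n. exact IHj.
    + apply DegLe_scal. apply DegLe_S. exact IHj.
    + apply DegLe_scal. apply DegLe_pow.
Qed.

Definition Q (j : nat) (c : R) (g : nat -> R) : Prop :=
  exists r, DegLe j r /\ forall n, g n = c * INR n ^ (S j) + r n.

Lemma Q_ext j c f g : (forall n, f n = g n) -> Q j c f -> Q j c g.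
Proof. intros E [r [Hr Hf]]. exists r. split; auto. intros; rewrite <- E; auto. Qed.

Lemma Q_shift j c g s : Q j c g -> Q j c (fun n => g (n + s)%nat).
Proof.
  intros [r [Hr Hg]]. exists (fun n => c * (INR (n + s) ^ S j - INR n ^ S j) + r (n + s)%nat).
  split.
  - apply DegLe_add.
    + apply DegLe_scal. apply (DegLe_pow (S j)).
    + apply DegLe_shift. auto.
  - intros n. rewrite Hg. ring.
Qed.

Lemma Q_step j c g d : Q (S j) c g -> Q j (INR (S (S j)) * c * INR d) (fun n => g (n + d)%nat - g n).
Proof.
  intros [r [Hr Hg]].
  exists (fun n => c * ((INR n + INR d) ^ (S (S j)) - INR n ^ (S (S j)) - INR (S (S j)) * INR d * INR n ^ (S j)) + (r (n + d)%nat - r n)).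
  split.
  - apply DegLe_add. + apply DegLe_scal. apply DiffPow. + apply Hr.
  - intros n. rewrite !Hg, plus_INR. ring.
Qed.

Definition Hyp (th B : R) := forall b M, Cmod (T (fun n => th * INR n + b) M) <= B.
Fixpoint HA (Hs : list nat) (c B : R) : Prop :=
  match Hs with
  | nil => Hyp c B
  | H :: Hs' => forall d, (1 <= d < H)%nat -> HA Hs' (INR (S (S (length Hs'))) * c * INR d) B
  end.
Fixpoint Ef (Hs : list nat) : R :=
  match Hs with nil => 0 | H :: Hs' => (/ INR H) ^ (2 ^ length Hs') + Ef Hs' end.

Lemma Ef_nonneg Hs : List.Forall (fun H => (1 <= H)%nat) Hs -> 0 <= Ef Hs.
Proof. induction 1 as [|x l Hx Hl IH]; simpl. lra. apply le_INR in Hx. simpl in Hx.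
  assert (0 <= (/ INR x) ^ 2 ^ length l) by (apply pow_le; apply Rlt_le, Rinv_0_lt_compat; lra). lra. Qed.

Lemma rsum_delta H r : (r < H)%nat -> rsum (fun s => if Nat.eq_dec r s then 1 else 0) H = 1.
Proof.
  induction H as [|H IH]; intros Hr. lia.
  cbn [rsum]. destruct (Nat.eq_dec r H).
  - subst. rewrite (rsum_ext _ (fun _ => 0)). rewrite rsum_const. lra.
    intros n Hn. destruct (Nat.eq_dec H n); [lia|auto].
  - rewrite IH by lia. lra.
Qed.

Lemma pow_le_self x n : 0 <= x <= 1 -> (1 <= n)%nat -> x ^ n <= x.
Proof. intros Hx Hn. destruct n. lia. simpl. pose proof (pow_le x n (proj1 Hx)).
  assert (x ^ n <= 1) by (rewrite <- (pow1 n); apply pow_incr; lra). nra. Qed.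

Lemma iter j : exists K, 0 <= K /\ forall g c L Hs B N,
  length Hs = j -> List.Forall (fun H => (1 <= H)%nat /\ (H <= N)%nat /\ INR H <= B) Hs ->
  (L <= N)%nat -> (1 <= N)%nat -> Q j c g -> HA Hs c B ->
  (Cmod (T g L) / INR N) ^ (2 ^ j) <= K * (Ef Hs + B / INR N).
Proof.
  induction j as [|j [K [HK IH]]].
  - exists 1. split; [lra|]. intros g c L Hs B N Hl HF HL HN [r [Hr Hg]] HA0.
    destruct Hs; [|simpl in Hl; lia]. simpl in HA0 |- *.
    assert (HNr : 1 <= INR N) by (apply (le_INR 1); auto).
    rewrite (T_ext g (fun n => c * INR n + r O)).
    2:{ intros n. rewrite Hg, (Hr n). ring. }
    specialize (HA0 (r O) L). rewrite Rmult_1_r.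
    unfold Rdiv. rewrite Rplus_0_l, Rmult_1_l. apply Rmult_le_compat_r; auto.
    apply Rlt_le, Rinv_0_lt_compat; lra.
  - set (p := (2 ^ j)%nat).
    exists (3 ^ (p - 1) * 8 ^ p * (1 + K)). split.
    { assert (0 < 3 ^ (p-1)) by (apply pow_lt; lra). assert (0 < 8 ^ p) by (apply pow_lt; lra).
      apply Rmult_le_pos; [apply Rmult_le_pos|]; lra. }
    intros g c L Hs B N Hl HF HL HN HQ HA0.
    destruct Hs as [|H Hs']; [simpl in Hl; lia|]. simpl in Hl. injection Hl as Hl.
    rewrite Forall_cons_iff in HF. destruct HF as [[H1 [HHN HHB]] HF'].
    simpl Ef. simpl in HA0. rewrite Hl.
    assert (HNr : 1 <= INR N) by (apply (le_INR 1); auto).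
    assert (HHr : 1 <= INR H) by (apply (le_INR 1); auto).
    assert (HHNr : INR H <= INR N) by (apply le_INR; auto).
    assert (HLNr : INR L <= INR N) by (apply le_INR; auto).
    assert (Hp : (1 <= p)%nat) by apply pow2j_pos.
    set (Y := K * (Ef Hs' + B / INR N)).
    assert (HE : 0 <= Ef Hs').
    { apply Ef_nonneg. eapply Forall_impl; [|apply HF']. simpl; tauto. }
    assert (HBN : 0 <= B / INR N) by (apply Rdiv_le_0_compat; lra).
    assert (HY : 0 <= Y) by (unfold Y; apply Rmult_le_pos; lra).
    set (x := fun r s => Cmod (T (fun n => g (n + max r s)%nat - g (n + min r s)%nat) L) / INR N).
    assert (Hx0 : forall r s, 0 <= x r s).
    { intros; unfold x. apply Rdiv_le_0_compat; [apply Cmod_ge_0|lra]. }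
    assert (Hx1 : forall r s, x r s <= 1).
    { intros; unfold x. apply Rmult_le_reg_r with (INR N); [lra|]. unfold Rdiv.
      rewrite Rmult_assoc, Rinv_l, Rmult_1_r by lra. rewrite Rmult_1_l.
      eapply Rle_trans; [apply T_le|auto]. }
    assert (Hoff : forall r s, (r < H)%nat -> (s < H)%nat -> r <> s -> x r s ^ p <= Y).
    { intros r s Hr Hs Hrs. unfold x, Y.
      set (m := min r s). set (d := (max r s - min r s)%nat).
      assert (Hd : (1 <= d < H)%nat) by (unfold d; lia).
      rewrite (T_ext _ (fun n => g (n + d + m)%nat - g (n + m)%nat)).
      2:{ intros n. unfold m, d. replace (n + (max r s - min r s) + min r s)%nat with (n + max r s)%nat by lia. reflexivity. }
      assert (F1 : List.Forall (fun H => (1 <= H)%nat /\ (H <= N)%nat /\ INR H <= B) Hs').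
      { eapply Forall_impl; [|apply HF']. simpl; tauto. }
      assert (Q1 := Q_step j c (fun n => g (n + m)%nat) d (Q_shift _ _ _ m HQ)).
      assert (HA1 : HA Hs' (INR (S (S j)) * c * INR d) B) by (rewrite <- Hl; apply HA0; auto).
      exact (IH _ _ L Hs' B N Hl F1 HL HN Q1 HA1). }
    set (x' := fun r s => if Nat.eq_dec r s then 0 else x r s).
    assert (Hx'0 : forall r s, 0 <= x' r s) by (intros; unfold x'; destruct Nat.eq_dec; auto; lra).
    set (S1 := rsum (fun r => rsum (fun s => x' r s) H) H).
    assert (HS1 : 0 <= S1) by (apply rsum_nonneg; intros; apply rsum_nonneg; auto).
    assert (Q2 : (Cmod (T g L) / INR N) ^ 2 <= 2 / INR H + 2 / INR H ^ 2 * S1 + 8 * (INR H / INR N) ^ 2).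
    { pose proof (vdc g L H H1) as V.
      set (SS := rsum (fun r => rsum (fun s => Cmod (T (fun n => g (n + max r s)%nat - g (n + min r s)%nat) L)) H) H) in V.
      assert (HSS : SS / INR N <= S1 + INR H).
      { assert (EH : rsum (fun r => rsum (fun s => if Nat.eq_dec r s then 1 else 0) H) H = INR H).
        { rewrite (rsum_ext _ (fun _ => 1)). rewrite rsum_const; ring. intros; apply rsum_delta; auto. }
        unfold SS. rewrite <- EH.
        unfold S1. rewrite <- rsum_plus. unfold Rdiv. rewrite Rmult_comm, <- rsum_scal. apply rsum_le; intros r Hr.
        rewrite <- rsum_plus, <- rsum_scal. apply rsum_le; intros s Hs.
        unfold x'. destruct (Nat.eq_dec r s).
        - specialize (Hx1 r s). unfold x in Hx1. unfold Rdiv in Hx1. lra.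
        - unfold x, Rdiv. lra. }
      assert (0 <= SS) by (apply rsum_nonneg; intros; apply rsum_nonneg; intros; apply Cmod_ge_0).
      assert (A1 : SS <= INR N * (S1 + INR H)).
      { apply Rmult_le_reg_r with (/ INR N). apply Rinv_0_lt_compat; lra.
        replace (INR N * (S1 + INR H) * / INR N) with (S1 + INR H) by (field; lra). exact HSS. }
      assert (A2 : 2 * INR L / INR H ^ 2 * SS <= 2 * INR N / INR H ^ 2 * (INR N * (S1 + INR H))).
      { apply Rmult_le_compat; try lra.
        - unfold Rdiv. apply Rmult_le_pos; [pose proof (pos_INR L); lra|]. apply Rlt_le, Rinv_0_lt_compat. nra.
        - unfold Rdiv. apply Rmult_le_compat_r; [apply Rlt_le, Rinv_0_lt_compat; nra| lra]. }
      assert (Main : Cmod (T g L)^2 <= INR N^2 * (2 / INR H + 2 / INR H ^ 2 * S1) + 8 * INR H ^ 2).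
      { eapply Rle_trans; [apply V|]. apply Rplus_le_compat_r. eapply Rle_trans; [apply A2|]. right; field; lra. }
      replace ((Cmod (T g L) / INR N)^2) with (Cmod (T g L)^2 / INR N ^2) by (field; lra).
      replace (8 * (INR H / INR N)^2) with (8 * INR H^2 / INR N^2) by (field; lra).
      apply Rmult_le_reg_r with (INR N^2); [nra|].
      replace (Cmod (T g L)^2 / INR N^2 * INR N^2) with (Cmod (T g L)^2) by (field; lra).
      replace ((2 / INR H + 2 / INR H ^ 2 * S1 + 8 * INR H ^ 2 / INR N ^ 2) * INR N^2) with
        (INR N^2 * (2 / INR H + 2 / INR H ^ 2 * S1) + 8 * INR H ^ 2) by (field; lra).
      exact Main. }
    assert (Hq : (Cmod (T g L) / INR N) ^ (2 ^ S j) = ((Cmod (T g L) / INR N) ^ 2) ^ p).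
    { rewrite <- pow_mult. f_equal. }
    rewrite Hq.
    set (a := 2 / INR H). set (b := 2 / INR H ^ 2 * S1). set (cc := 8 * (INR H / INR N) ^ 2).
    assert (Ha : 0 <= a) by (unfold a; apply Rdiv_le_0_compat; lra).
    assert (Hb : 0 <= b) by (unfold b; apply Rmult_le_pos; auto; apply Rdiv_le_0_compat; nra).
    assert (Hc : 0 <= cc) by (unfold cc; apply Rmult_le_pos; [lra|apply pow2_ge_0]).
    eapply Rle_trans. { apply pow_incr. split; [apply pow2_ge_0| apply Q2]. }
    eapply Rle_trans; [apply pow3; auto|]. fold p.
    assert (Ba : a ^ p = 2 ^ p * (/ INR H) ^ p) by (unfold a, Rdiv; apply Rpow_mult_distr).
    assert (Bb : b ^ p <= 2 ^ p * Y).
    { unfold b. rewrite Rpow_mult_distr.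
      assert (PM : S1 ^ p <= INR H ^ (2 * p) * Y).
      { unfold S1. unfold p. eapply Rle_trans; [apply power_mean; intros; apply rsum_nonneg; auto|]. fold p.
        eapply Rle_trans.
        { apply Rmult_le_compat_l; [apply pow_le, pos_INR|]. apply rsum_le. intros r Hr.
          eapply Rle_trans; [unfold p; apply power_mean; auto|]. fold p.
          apply Rmult_le_compat_l; [apply pow_le, pos_INR|]. 
          eapply Rle_trans. { apply rsum_le. intros s Hs. instantiate (1 := fun _ => Y).
            simpl. unfold x'. destruct (Nat.eq_dec r s).
            - rewrite pow_i by lia. auto.
            - apply Hoff; auto. }
          rewrite rsum_const. apply Rle_refl. }
        rewrite rsum_const. right.
        replace (2 * p)%nat with ((p - 1) + (p - 1) + 1 + 1)%nat by lia.
        rewrite !pow_add, !pow_1. ring. }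
      unfold Rdiv. rewrite Rpow_mult_distr.
      assert (0 < INR H ^ (2 * p)) by (apply pow_lt; lra).
      assert (E2 : (/ INR H ^ 2) ^ p = / INR H ^ (2 * p)).
      { rewrite pow_mult. rewrite pow_inv. reflexivity. }
      rewrite E2.
      assert (0 < 2 ^ p) by (apply pow_lt; lra).
      apply Rmult_le_reg_r with (INR H ^ (2 * p)); auto.
      replace (2 ^ p * / INR H ^ (2 * p) * S1 ^ p * INR H ^ (2 * p)) with (2 ^ p * S1 ^ p) by (field; lra).
      nra. }
    assert (Bc : cc ^ p <= 8 ^ p * (B / INR N)).
    { unfold cc. rewrite Rpow_mult_distr. apply Rmult_le_compat_l; [apply pow_le; lra|].
      rewrite <- pow_mult. eapply Rle_trans; [apply pow_le_self; [split|lia]|].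
      - apply Rdiv_le_0_compat; lra.
      - apply Rmult_le_reg_r with (INR N); [lra|]. unfold Rdiv. rewrite Rmult_assoc, Rinv_l by lra. lra.
      - unfold Rdiv. apply Rmult_le_compat_r; auto. apply Rlt_le, Rinv_0_lt_compat; lra. }
    assert (P2 : 0 <= 2 ^ p) by (apply pow_le; lra).
    assert (P28 : 2 ^ p <= 8 ^ p) by (apply pow_incr; lra).
    assert (P3 : 0 <= 3 ^ (p - 1)) by (apply pow_le; lra).
    assert (HIp : 0 <= (/ INR H) ^ p) by (apply pow_le, Rlt_le, Rinv_0_lt_compat; lra).
    change (3 ^ (p - 1) * (a ^ p + b ^ p + cc ^ p) <= 3 ^ (p - 1) * 8 ^ p * (1 + K) * ((/ INR H) ^ p + Ef Hs' + B / INR N)).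
    rewrite Ba. rewrite Rmult_assoc, Rmult_assoc. apply Rmult_le_compat_l; auto.
    unfold Y in Bb.
    assert (0 <= K * Ef Hs') by nra. assert (0 <= K * (B / INR N)) by nra.
    set (u := (/ INR H) ^ p) in *. set (v := B / INR N) in *.
    assert (2 ^ p * u <= 8 ^ p * u) by nra.
    assert (2 ^ p * (K * (Ef Hs' + v)) <= 8 ^ p * (K * (Ef Hs' + v))) by nra.
    assert (0 <= 8^p * (K*u)) by (apply Rmult_le_pos; nra).
    assert (0 <= 8^p * Ef Hs') by (apply Rmult_le_pos; nra).
    replace (8^p * ((1+K)*(u+Ef Hs'+v))) with (8^p*u + 8^p*Ef Hs' + 8^p*v + 8^p*(K*u) + 8^p*(K*(Ef Hs'+v))) by ring.
    lra.
Qed.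

Lemma expsum_T f N : expsum f N = T (fun n => f (S n)) N.
Proof. induction N; simpl; auto. rewrite IHN. reflexivity. Qed.

Lemma DegLe_sum alpha j : forall m, (m <= j)%nat ->
  DegLe j (fun n => sum_f_R0 (fun i => alpha i * INR (S n) ^ i) m).
Proof.
  induction m; intros Hm.
  - simpl. eapply DegLe_ext; [|apply (DegLe_const j (alpha O))]. intros; simpl; ring.
  - simpl. apply DegLe_add; [apply IHm; lia|]. apply DegLe_scal.
    apply DegLe_le with (S m); [lia|].
    eapply DegLe_ext; [|apply (DegLe_shift _ _ 1 (DegLe_pow (S m)))].
    intros n. simpl. rewrite Nat.add_1_r. reflexivity.
Qed.

Lemma Q_poly alpha j h :
  Q j (INR h * alpha (S j)) (fun n => INR h * poly_eval alpha (S j) (S n)).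
Proof.
  exists (fun n => INR h * alpha (S j) * (INR (n + 1) ^ S j - INR n ^ S j)
           + INR h * sum_f_R0 (fun i => alpha i * INR (S n) ^ i) j).
  split.
  - apply DegLe_add.
    + apply DegLe_scal. apply (DegLe_pow (S j)).
    + apply DegLe_scal. apply DegLe_sum. lia.
  - intros n. unfold poly_eval. rewrite tech5. rewrite Nat.add_1_r. ring.
Qed.

Fixpoint prodH (Hs : list nat) : nat := match Hs with nil => 1%nat | H :: t => (H * prodH t)%nat end.

Lemma HA_intro B th : forall Hs M, (1 <= M)%nat ->
  (forall m, (1 <= m)%nat -> (m <= M * fact (S (length Hs)) * prodH Hs)%nat -> Hyp (th * INR m) B) ->
  HA Hs (th * INR M) B.
Proof.
  induction Hs as [|H Hs IH]; intros M HM Hyp0.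
  - simpl. apply Hyp0; auto. simpl. lia.
  - cbn [HA]. intros d Hd.
    replace (INR (S (S (length Hs))) * (th * INR M) * INR d) with (th * INR (M * S (S (length Hs)) * d)).
    2:{ rewrite !mult_INR. ring. }
    apply IH. { apply Nat.le_trans with (1 * 1 * 1)%nat; [lia|]. apply Nat.mul_le_mono; [apply Nat.mul_le_mono|]; lia. }
    intros m Hm1 Hm2. apply Hyp0; auto.
    eapply Nat.le_trans; [apply Hm2|].
    change (fact (S (S (length Hs)))) with ((S (S (length Hs))) * fact (S (length Hs)))%nat.
    replace (M * S (S (length Hs)) * d * fact (S (length Hs)) * prodH Hs)%nat
      with (M * (S (S (length Hs)) * fact (S (length Hs))) * (d * prodH Hs))%nat by ring.
    replace (M * (S (S (length Hs)) * fact (S (length Hs))) * (H * prodH Hs))%nat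
      with (M * (S (S (length Hs)) * fact (S (length Hs))) * (H * prodH Hs))%nat by ring.
    apply Nat.mul_le_mono_l. apply Nat.mul_le_mono_r. lia.
Qed.

Lemma sin_lb_third y : 0 <= y <= 2 -> y/3 <= sin_lb y.
Proof.
intros Hy. unfold sin_lb, sin_approx, sin_term. rewrite !tech5. simpl sum_f_R0.
rewrite !INR_IZR_INZ. simpl Z.of_nat. simpl pow.
assert (0 <= y*y) by nra. assert (0 <= y*y*y*y*y) by (apply Rmult_le_pos; [nra|nra]).
assert (y * y <= 4) by nra.
assert (0 <= y*y*y*y*y * (1/120 - y*y/5040)) by (apply Rmult_le_pos; lra).
assert (y*y*y <= 4 * y) by nra.
nra.
Qed.

Lemma sin_lower t d : 0 < d <= 1/2 -> d <= t -> d <= 1 - t -> d <= sin (PI * t).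
Proof.
  intros Hd H1 H2. pose proof PI_4. pose proof PI2_3_2.
  assert (Hgen : forall u, d <= u <= 1/2 -> d <= sin (PI * u)).
  { intros u Hu. assert (0 <= PI * u <= 2) by nra.
    destruct (SIN (PI * u)) as [S1 _]; try nra.
    pose proof (sin_lb_third (PI * u) H3). nra. }
  destruct (Rle_dec t (1/2)).
  - apply Hgen; lra.
  - replace (PI * t) with (PI - PI * (1 - t)) by ring. rewrite sin_PI_x. apply Hgen; lra.
Qed.

Lemma cos_periodZ x z : cos (x + 2 * IZR z * PI) = cos x.
Proof.
  destruct z as [|p|p].
  - simpl. f_equal. ring.
  - assert (E : IZR (Zpos p) = INR (Pos.to_nat p)) by (rewrite INR_IZR_INZ, positive_nat_Z; reflexivity).
    rewrite E. apply cos_period.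
  - assert (E : IZR (Zneg p) = - INR (Pos.to_nat p)) by (rewrite INR_IZR_INZ, positive_nat_Z; reflexivity).
    rewrite E.
    rewrite <- (cos_period (x + 2 * - INR (Pos.to_nat p) * PI) (Pos.to_nat p)). f_equal. ring.
Qed.

Lemma e_mult x y : Cmult (e x) (e y) = e (x + y).
Proof. unfold e, Cmult. simpl. replace (2 * PI * (x + y)) with (2 * PI * x + 2 * PI * y) by ring.
  rewrite cos_plus, sin_plus. apply injective_projections; simpl; ring. Qed.

Lemma geo_id th b M : Cmult (T (fun n => th * INR n + b) M) (Csub (1,0) (e th)) = Csub (e b) (e (th * INR M + b)).
Proof.
  induction M.
  - unfold T; simpl. unfold Csub, Cmult; simpl. rewrite Rmult_0_r, Rplus_0_l.
    apply injective_projections; simpl; ring.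
  - unfold T in *. cbn [csum]. fold (T (fun n => th * INR n + b) M) in *.
    assert (E1 := e_mult (th * INR M + b) th).
    replace (th * INR M + b + th) with (th * INR (S M) + b) in E1 by (rewrite S_INR; ring).
    rewrite <- E1.
    apply (f_equal fst) in IHM as F1. apply (f_equal snd) in IHM as F2.
    unfold Cmult, Csub, Cplus in *. cbn [fst snd] in *.
    apply injective_projections; cbn [fst snd]; nra.
Qed.

Lemma geo th b M d : 0 < d <= 1/2 -> (forall z, d <= Rabs (th - IZR z)) ->
  Cmod (T (fun n => th * INR n + b) M) <= / d.
Proof.
  intros Hd Hz.
  set (w := Csub (1,0) (e th)).
  assert (E1 : Cmod (T (fun n => th * INR n + b) M) * Cmod w <= 2).
  { rewrite <- Cmod_mult. unfold w. rewrite geo_id. eapply Rle_trans; [apply Cmod_Csub_le|].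
    rewrite !Cmod_e. lra. }
  set (z := Int_part th). set (t := th - IZR z).
  destruct (base_Int_part th) as [B1 B2]. fold z in B1, B2.
  assert (Ht1 : d <= t). { specialize (Hz z). rewrite Rabs_right in Hz; unfold t; lra. }
  assert (Ht2 : d <= 1 - t). { specialize (Hz (z + 1)%Z). rewrite plus_IZR in Hz. simpl in Hz.
    rewrite Rabs_left1 in Hz; unfold t; lra. }
  assert (Hs := sin_lower t d Hd Ht1 Ht2).
  assert (Ew : Cmod w ^ 2 = 4 * sin (PI * t) ^ 2).
  { rewrite Cmod_sq. unfold w, Csub, e. cbn [fst snd].
    replace (2 * PI * th) with (2 * (PI * t) + 2 * IZR z * PI) by (unfold t; ring).
    rewrite cos_periodZ.
    assert (sin (2 * (PI * t) + 2 * IZR z * PI) ^ 2 = sin (2 * (PI * t)) ^ 2).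
    { pose proof (sin2_cos2 (2 * (PI * t) + 2 * IZR z * PI)). pose proof (sin2_cos2 (2 * (PI * t))).
      rewrite cos_periodZ in H. unfold Rsqr in *. nra. }
    replace ((0 - sin (2 * (PI * t) + 2 * IZR z * PI)) ^ 2) with (sin (2 * (PI * t) + 2 * IZR z * PI) ^ 2) by ring.
    rewrite H, cos_2a_sin, sin_2a. pose proof (sin2_cos2 (PI * t)). unfold Rsqr in H0.
    transitivity (4 * sin (PI * t) ^ 2 * (sin (PI * t) * sin (PI * t) + cos (PI * t) * cos (PI * t))); [ring| rewrite H0; ring]. }
  assert (Hw : 2 * d <= Cmod w).
  { apply Rsqr_incr_0_var; [| apply Cmod_ge_0]. unfold Rsqr. rewrite <- Rsqr_pow2 in Ew. unfold Rsqr in Ew.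
    rewrite Ew. nra. }
  assert (0 <= Cmod (T (fun n => th * INR n + b) M)) by apply Cmod_ge_0.
  apply Rmult_le_reg_r with (2 * d). lra.
  replace (/ d * (2 * d)) with 2 by (field; lra). nra.
Qed.

Lemma IZR_abs_ge1 k : k <> 0%Z -> 1 <= Rabs (IZR k).
Proof. intros Hk. destruct (Z_lt_le_dec k 0).
  - rewrite Rabs_left by (apply IZR_lt; auto). assert (IZR k <= -1) by (apply IZR_le; lia). lra.
  - rewrite Rabs_right by (apply Rle_ge, IZR_le; auto). apply IZR_le. lia. Qed.

Lemma dioph (a : R) (p : Z) (q m : nat) : (0 < q)%nat -> Z.gcd p (Z.of_nat q) = 1%Z ->
  Rabs (a - IZR p / INR q) <= 1 / INR q ^ 2 -> (1 <= m)%nat -> (2 * m <= q)%nat ->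
  forall z, / (2 * INR q) <= Rabs (a * INR m - IZR z).
Proof.
  intros Hq Hg Ha Hm1 Hm2 z.
  set (k := (Z.of_nat m * p - z * Z.of_nat q)%Z).
  assert (Hk : k <> 0%Z).
  { intros E. assert (D : (Z.of_nat q | p * Z.of_nat m)%Z).
    { exists z. unfold k in E. lia. }
    apply Z.gauss in D; [|rewrite Z.gcd_comm; auto].
    apply Z.divide_pos_le in D; lia. }
  assert (HQ : 0 < INR q) by (apply lt_0_INR; auto).
  assert (HQm : 2 * INR m <= INR q).
  { replace 2 with (INR 2) by reflexivity. rewrite <- mult_INR. apply le_INR; auto. }
  assert (Ek : IZR k = INR m * IZR p - IZR z * INR q).
  { unfold k. rewrite minus_IZR, !mult_IZR, <- !INR_IZR_INZ. ring. }
  set (X := IZR k / INR q). set (Y := INR m * (a - IZR p / INR q)).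
  assert (EXY : a * INR m - IZR z = X - - Y). { unfold X, Y. rewrite Ek. field. lra. }
  rewrite EXY. eapply Rle_trans; [|apply Rabs_triang_inv]. rewrite Rabs_Ropp.
  assert (HX : / INR q <= Rabs X).
  { unfold X. rewrite Rabs_div by lra. rewrite (Rabs_right (INR q)) by lra.
    pose proof (IZR_abs_ge1 k Hk). unfold Rdiv. rewrite <- (Rmult_1_l (/ INR q)) at 1.
    apply Rmult_le_compat_r; [|lra]. apply Rlt_le, Rinv_0_lt_compat; lra. }
  assert (HY : Rabs Y <= / (2 * INR q)).
  { unfold Y. rewrite Rabs_mult, (Rabs_right (INR m)) by (apply Rle_ge, pos_INR).
    eapply Rle_trans. { apply Rmult_le_compat_l; [apply pos_INR|apply Ha]. }
    apply Rmult_le_reg_r with (2 * INR q ^ 2). nra.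
    replace (INR m * (1 / INR q ^ 2) * (2 * INR q ^ 2)) with (2 * INR m) by (field; lra).
    replace (/ (2 * INR q) * (2 * INR q ^ 2)) with (INR q) by (field; lra). lra. }
  assert (/ INR q = 2 * / (2 * INR q)) by (field; lra). lra.
Qed.

Definition sR (Rr e : nat) : R := Rpower (INR Rr) (/ 2 ^ e).
Definition Hf (Rr e : nat) : nat := Z.to_nat (Int_part (sR Rr e)).

Lemma sR_bounds Rr e : (1 <= Rr)%nat -> 1 <= sR Rr e <= INR Rr.
Proof.
  intros HR. assert (HRr : 1 <= INR Rr) by (apply (le_INR 1); auto).
  assert (0 < 2 ^ e) by (apply pow_lt; lra).
  assert (2 ^ e >= 1) by (apply Rle_ge, pow_R1_Rle; lra).
  assert (0 < / 2 ^ e) by (apply Rinv_0_lt_compat; lra).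
  assert (/ 2 ^ e <= 1) by (rewrite <- Rinv_1; apply Rinv_le_contravar; lra).
  unfold sR. split.
  - rewrite <- (Rpower_O (INR Rr)) by lra. apply Rle_Rpower; lra.
  - rewrite <- (Rpower_1 (INR Rr)) at 2 by lra. apply Rle_Rpower; lra.
Qed.

Lemma Hf_bounds Rr e : (1 <= Rr)%nat ->
  (1 <= Hf Rr e)%nat /\ INR (Hf Rr e) <= sR Rr e /\ sR Rr e < INR (Hf Rr e) + 1.
Proof.
  intros HR. destruct (sR_bounds Rr e HR) as [S1 S2].
  destruct (base_Int_part (sR Rr e)) as [B1 B2].
  assert (Hz : (0 < Int_part (sR Rr e))%Z) by (apply lt_IZR; lra).
  assert (E : INR (Hf Rr e) = IZR (Int_part (sR Rr e))).
  { unfold Hf. rewrite INR_IZR_INZ, Z2Nat.id by lia. reflexivity. }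
  rewrite E. split; [|split; lra].
  unfold Hf. lia.
Qed.

Lemma sR_pow Rr e : (1 <= Rr)%nat -> sR Rr e ^ (2 ^ e) = INR Rr.
Proof.
  intros HR. destruct (sR_bounds Rr e HR) as [S1 S2].
  assert (0 < 2 ^ e) by (apply pow_lt; lra).
  rewrite <- Rpower_pow by lra. unfold sR. rewrite Rpower_mult, pow_INR.
  replace (INR 2) with 2 by reflexivity. rewrite Rinv_l by lra. apply Rpower_1. lra.
Qed.

Lemma Hf_pow Rr e : (1 <= Rr)%nat -> (/ INR (Hf Rr e)) ^ (2 ^ e) <= 2 ^ (2 ^ e) / INR Rr.
Proof.
  intros HR. destruct (Hf_bounds Rr e HR) as [H1 [H2 H3]].
  destruct (sR_bounds Rr e HR) as [S1 S2].
  assert (HH : 1 <= INR (Hf Rr e)) by (apply (le_INR 1); auto).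
  assert (L1 : / INR (Hf Rr e) <= 2 / sR Rr e).
  { apply Rmult_le_reg_r with (sR Rr e * INR (Hf Rr e)). nra.
    replace (/ INR (Hf Rr e) * (sR Rr e * INR (Hf Rr e))) with (sR Rr e) by (field; lra).
    replace (2 / sR Rr e * (sR Rr e * INR (Hf Rr e))) with (2 * INR (Hf Rr e)) by (field; lra). lra. }
  eapply Rle_trans. { apply pow_incr. split; [apply Rlt_le, Rinv_0_lt_compat; lra| exact L1]. }
  unfold Rdiv. rewrite Rpow_mult_distr, pow_inv, sR_pow by auto. lra.
Qed.

Fixpoint mkHs (Rr j : nat) : list nat :=
  match j with O => nil | S j' => Hf Rr j' :: mkHs Rr j' end.

Lemma mkHs_length Rr j : length (mkHs Rr j) = j.
Proof. induction j; simpl; auto. Qed.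

Lemma mkHs_Ef Rr j : (1 <= Rr)%nat -> Ef (mkHs Rr j) <= rsum (fun e => 2 ^ (2 ^ e)) j / INR Rr.
Proof.
  intros HR. induction j; simpl Ef; cbn [rsum].
  - unfold Rdiv. lra.
  - rewrite mkHs_length. pose proof (Hf_pow Rr j HR). unfold Rdiv in *. lra.
Qed.

Lemma mkHs_prod Rr j : (1 <= Rr)%nat -> INR (prodH (mkHs Rr j)) <= Rpower (INR Rr) (rsum (fun e => / 2 ^ e) j).
Proof.
  intros HR. assert (HRr : 1 <= INR Rr) by (apply (le_INR 1); auto).
  induction j; cbn [mkHs prodH rsum].
  - rewrite Rpower_O by lra. simpl. lra.
  - rewrite mult_INR, Rplus_comm, Rpower_plus. destruct (Hf_bounds Rr j HR) as [H1 [H2 H3]].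
    apply Rmult_le_compat; auto using pos_INR.
Qed.

Lemma geom_half j : rsum (fun e => / 2 ^ e) j = 2 - 2 / 2 ^ j.
Proof. induction j; cbn [rsum]. - simpl. lra.
  - rewrite IHj. simpl. assert (0 < 2 ^ j) by (apply pow_lt; lra). field. lra. Qed.

Lemma mkHs_Forall Rr j N B : (1 <= Rr)%nat -> (Rr <= N)%nat -> (j = 0%nat \/ INR Rr <= B) ->
  List.Forall (fun H => (1 <= H)%nat /\ (H <= N)%nat /\ INR H <= B) (mkHs Rr j).
Proof.
  intros HR HN Hj. destruct j as [|j]; [constructor|].
  destruct Hj as [Hj|Hj]; [lia|].
  assert (INR Rr <= INR N) by (apply le_INR; auto).
  generalize (S j). intros j'. induction j'; simpl; constructor; auto.
  destruct (Hf_bounds Rr j' HR) as [H1 [H2 H3]]. destruct (sR_bounds Rr j' HR).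
  split; auto. split; [|lra]. apply INR_le. lra.
Qed.

Lemma root X Z Cc n : 0 <= X -> 0 < Z -> 1 <= Cc -> (1 <= n)%nat -> X ^ n <= Cc * Z ->
  X <= Cc * Rpower Z (1 / INR n).
Proof.
  intros HX HZ HC Hn H. set (y := INR n). assert (Hy : 1 <= y) by (apply (le_INR 1); auto).
  assert (0 < Rpower Z (1 / y)) by apply exp_pos.
  destruct (Req_dec X 0) as [E|E]. { rewrite E. nra. }
  assert (0 < X) by lra. rewrite <- Rpower_pow in H by lra. fold y in H.
  replace X with (Rpower (Rpower X y) (1 / y)) at 1.
  2:{ rewrite Rpower_mult. replace (y * (1 / y)) with 1 by (field; lra). apply Rpower_1; auto. }
  eapply Rle_trans. { apply Rle_Rpower_l. apply Rlt_le, Rdiv_lt_0_compat; lra. split; [apply exp_pos|exact H]. }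
  rewrite <- Rpower_mult_distr by lra.
  apply Rmult_le_compat_r; [lra|].
  rewrite <- (Rpower_1 Cc) at 2 by lra. apply Rle_Rpower; auto.
  apply Rmult_le_reg_r with y; [lra|]. replace (1 / y * y) with 1 by (field; lra). lra.
Qed.

Theorem proposition1 :
  forall k : nat, (1 <= k)%nat ->
  exists Ck : R,
  forall (alpha : nat -> R) (q Rr h : nat) (p : Z) (N : nat),
    alpha k <> 0 ->
    (0 < q)%nat -> (0 < Rr)%nat -> (0 < h)%nat ->
    Z.gcd p (Z.of_nat q) = 1%Z ->
    Rabs (alpha k - IZR p / INR q) <= 1 / (INR q ^ 2) ->
    2 * INR h * INR (fact k) * Rpower (INR Rr) (2 - 1 / Rpower 2 (INR k - 2)) <= INR q ->
    (Rr <= N)%nat ->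
    / INR N * Cmod (expsum (fun n => INR h * poly_eval alpha k n) N)
      <= Ck * Rpower (/ INR Rr + INR q / INR N) (1 / 2 ^ (k - 1)).
Proof.
  intros k Hk. destruct k as [|j]; [lia|].
  destruct (iter j) as [K [HK Hiter]].
  set (Cj := rsum (fun e => 2 ^ (2 ^ e)) j).
  assert (HCj : 0 <= Cj) by (apply rsum_nonneg; intros; apply pow_le; lra).
  exists (K * (Cj + 2) + 1).
  intros alpha q Rr h p N Hak Hq HR Hh Hg Ha Hcond HRN.
  replace (S j - 1)%nat with j by lia.
  rewrite expsum_T.
  set (g := fun n => INR h * poly_eval alpha (S j) (S n)).
  set (Hs := mkHs Rr j). set (B := 2 * INR q).
  assert (HRr : 1 <= INR Rr) by (apply (le_INR 1); auto).
  assert (HNr : INR Rr <= INR N) by (apply le_INR; auto).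
  assert (HQr : 1 <= INR q) by (apply (le_INR 1); auto).
  assert (Hhr : 1 <= INR h) by (apply (le_INR 1); auto).
  assert (Hfact : 1 <= INR (fact (S j))) by (apply (le_INR 1); apply lt_O_fact).
  assert (Eexp : 2 - 1 / Rpower 2 (INR (S j) - 2) = rsum (fun e => / 2 ^ e) j).
  { rewrite geom_half. rewrite S_INR. replace (INR j + 1 - 2) with (INR j + - (1)) by ring.
    rewrite Rpower_plus, Rpower_Ropp, Rpower_1, Rpower_pow by lra.
    assert (0 < 2 ^ j) by (apply pow_lt; lra). field. lra. }
  rewrite Eexp in Hcond.
  assert (Hprod := mkHs_prod Rr j HR). fold Hs in Hprod.
  assert (Hprod2 : (2 * (h * fact (S j) * prodH Hs) <= q)%nat).
  { apply INR_le. rewrite !mult_INR. replace (INR 2) with 2 by reflexivity.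
    eapply Rle_trans; [|apply Hcond].
    assert (0 <= INR (prodH Hs)) by apply pos_INR.
    assert (0 <= 2 * INR h * INR (fact (S j))) by nra.
    replace (2 * (INR h * INR (fact (S j)) * INR (prodH Hs))) with (2 * INR h * INR (fact (S j)) * INR (prodH Hs)) by ring.
    apply Rmult_le_compat_l; auto. }
  assert (HA1 : HA Hs (INR h * alpha (S j)) B).
  { rewrite Rmult_comm. apply HA_intro; [lia|].
    intros m Hm1 Hm2. unfold Hs in Hm2. rewrite mkHs_length in Hm2. fold Hs in Hm2.
    intros b M. unfold B.
    replace (2 * INR q) with (/ / (2 * INR q)) by (rewrite Rinv_inv; reflexivity).
    apply geo.
    - split. apply Rinv_0_lt_compat; lra. unfold Rdiv. rewrite Rmult_1_l.
      apply Rinv_le_contravar; lra.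
    - apply (dioph _ p q m); auto. lia. }
  assert (HF : List.Forall (fun H => (1 <= H)%nat /\ (H <= N)%nat /\ INR H <= B) Hs).
  { apply mkHs_Forall; auto. destruct j as [|j']; [left; auto|right].
    unfold B. rewrite geom_half in Hcond.
    assert (2 ^ S j' >= 2) by (simpl; assert (1 <= 2 ^ j') by (apply pow_R1_Rle; lra); lra).
    assert (Rpower (INR Rr) 1 <= Rpower (INR Rr) (2 - 2 / 2 ^ S j')).
    { apply Rle_Rpower; auto. assert (2 / 2 ^ S j' <= 1).
      { apply Rmult_le_reg_r with (2 ^ S j'); [lra|]. unfold Rdiv. rewrite Rmult_assoc, Rinv_l; lra. } lra. }
    rewrite Rpower_1 in H0 by lra.
    assert (2 <= 2 * INR h * INR (fact (S (S j')))) by nra.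
    assert (0 < Rpower (INR Rr) (2 - 2 / 2 ^ S j')) by apply exp_pos.
    nra. }
  assert (HQ := Q_poly alpha j h). fold g in HQ.
  assert (Hmain := Hiter g (INR h * alpha (S j)) N Hs B N (mkHs_length Rr j) HF (le_n N) ltac:(lia) HQ HA1).
  assert (HE := mkHs_Ef Rr j HR). fold Hs Cj in HE.
  assert (HNpos : 0 < INR N) by lra.
  set (X := Cmod (T g N) / INR N) in Hmain.
  set (Zv := / INR Rr + INR q / INR N).
  assert (HZ : 0 < Zv) by (unfold Zv; assert (0 < / INR Rr) by (apply Rinv_0_lt_compat; lra);
     assert (0 < INR q / INR N) by (apply Rdiv_lt_0_compat; lra); lra).
  assert (Hbound : X ^ (2 ^ j) <= (K * (Cj + 2) + 1) * Zv).
  { eapply Rle_trans; [apply Hmain|].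
    assert (0 <= Cj / INR Rr) by (apply Rdiv_le_0_compat; lra).
    assert (0 <= / INR Rr) by (apply Rlt_le, Rinv_0_lt_compat; lra).
    assert (0 <= INR q / INR N) by (apply Rdiv_le_0_compat; lra).
    unfold Zv, B. unfold Rdiv in *.
    assert (K * (Ef Hs + 2 * INR q * / INR N) <= K * (Cj * / INR Rr + 2 * (INR q * / INR N))).
    { apply Rmult_le_compat_l; auto. lra. }
    assert (0 <= K * Cj) by nra.
    nra. }
  rewrite Rmult_comm. change (X <= (K * (Cj + 2) + 1) * Rpower Zv (1 / 2 ^ j)).
  replace (2 ^ j) with (INR (2 ^ j)) by (rewrite pow_INR; reflexivity).
  apply root; auto.
  - unfold X. apply Rdiv_le_0_compat; [apply Cmod_ge_0|lra].
  - nra.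
  - apply pow2j_pos.
Qed.
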